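(* Let $\mathcal P$ be a CPOS $2n$-gon, let $i,j$ be indices with $j\notin\{i-1,i,i+n-1,i+n\}$ (mod $2n$), and let $\lambda_0\in\mathbb R$ be such that $f_i(\lambda_0)\neq0$, the vertex $P_i(\lambda_0)$ lies in the relative interior of the edge $[P_j(\lambda_0),P_{j+1}(\lambda_0)]$ of $\mathcal P_{\lambda_0}$, and this crossing is transversal, i.e. $\lambda\mapsto[P_i(\lambda)-P_j(\lambda),e(j+\tfrac12)(\lambda)]$ has nonzero derivative at $\lambda_0$. For $\lambda$ near $\lambda_0$ let $\Gamma_-(\lambda)$ (resp. $\Gamma_+(\lambda)$) be the intersection of the segment $[P_j(\lambda),P_{j+1}(\lambda)]$ with $[P_{i-1}(\lambda),P_i(\lambda)]$ (resp. $[P_i(\lambda),P_{i+1}(\lambda)]$); these are the two branches of the equidistant symmetry set meeting at the vertex $P_i(\lambda_0)$. Then, for some $\epsilon>0$, all points of $\bigcup_{0<|\lambda-\lambda_0|<\epsilon}(\Gamma_-(\lambda)\cup\Gamma_+(\lambda))$ lie in one and the same open half-plane bounded by the great diagonal $d_i$ (the vertex is a cusp of the equidistant symmetry set) if and only if $f_i(\lambda_0)<0$, i.e. if and only if $P_i(\lambda_0)$ belongs to the central symmetry set.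
   Context: A CPOS $2n$-gon ($n\ge2$) is a closed planar polygon $\mathcal P$ with vertices $P_1,\dots,P_{2n}$ (indices mod $2n$) bounding a convex region, with no two adjacent sides parallel, with $P_{i+n+1}-P_{i+n}$ parallel to $P_{i+1}-P_i$ for all $i$, and positively oriented: $[P_{i+1}-P_i,P_{j+1}-P_j]>0$ for $1\le i<j\le n$ ($[\cdot,\cdot]$ = determinant). $d_i$ is the line through $P_i,P_{i+n}$; $D(i+\tfrac12)=d_i\cap d_{i+1}$; the central symmetry set is the closed polygon with vertices $D(1+\frac12),\dots,D(n+\frac12)$. The equidistant of level $\lambda\in\mathbb R$ is the polygon $\mathcal P_\lambda$ with vertices $P_i(\lambda)=P_i+\lambda(P_{i+n}-P_i)$ and edge vectors $e(i+\tfrac12)(\lambda)=P_{i+1}(\lambda)-P_i(\lambda)$; $f_i(\lambda)=[e(i-\tfrac12)(\lambda),e(i+\tfrac12)(\lambda)]$. The equidistant symmetry set is the set of self-intersection points of the equidistants $\mathcal P_\lambda$, $\lambda\in\mathbb R$ (points lying on two non-adjacent edges of the same $\mathcal P_\lambda$). *)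

(* Defs.v *)
From Stdlib Require Import Reals Lra Lia ZArith.
Open Scope R_scope.

Definition pt := (R * R)%type.

Definition padd (a b : pt) : pt := (fst a + fst b, snd a + snd b).
Definition psub (a b : pt) : pt := (fst a - fst b, snd a - snd b).
Definition pscale (t : R) (a : pt) : pt := (t * fst a, t * snd a).

Definition cross (a b : pt) : R := fst a * snd b - snd a * fst b.

(* A polygon is a map P : Z -> pt, vertices indexed mod 2n (periodicity is part of is_CPOS). *)
Definition edge (P : Z -> pt) (k : Z) : pt := psub (P (k + 1)%Z) (P k).

Definition is_CPOS (n : nat) (P : Z -> pt) : Prop :=
  (2 <= n)%nat /\
  (forall k : Z, P (k + 2 * Z.of_nat n)%Z = P k) /\
  (* bounds a convex region (positively oriented): every vertex lies weakly to the
     left of every edge line *)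
  (forall k m : Z, 0 <= cross (edge P k) (psub (P m) (P k))) /\
  (forall k : Z, cross (edge P (k - 1)%Z) (edge P k) <> 0) /\
  (forall k : Z, cross (edge P (k + Z.of_nat n)%Z) (edge P k) = 0) /\
  (* positively oriented *)
  (forall a b : Z, (1 <= a)%Z -> (a < b)%Z -> (b <= Z.of_nat n)%Z ->
     0 < cross (edge P a) (edge P b)).

Definition Peq (n : nat) (P : Z -> pt) (k : Z) (l : R) : pt :=
  padd (P k) (pscale l (psub (P (k + Z.of_nat n)%Z) (P k))).

Definition eeq (n : nat) (P : Z -> pt) (k : Z) (l : R) : pt :=
  psub (Peq n P (k + 1)%Z l) (Peq n P k l).

Definition feq (n : nat) (P : Z -> pt) (k : Z) (l : R) : R :=
  cross (eeq n P (k - 1)%Z l) (eeq n P k l).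

Definition in_seg (a b x : pt) : Prop :=
  exists t : R, 0 <= t <= 1 /\ x = padd a (pscale t (psub b a)).

Definition in_open_seg (a b x : pt) : Prop :=
  exists t : R, 0 < t < 1 /\ x = padd a (pscale t (psub b a)).

Definition idx_eq (n : nat) (a b : Z) : Prop :=
  Z.modulo (a - b) (2 * Z.of_nat n) = 0%Z.

Definition Gamma_minus (n : nat) (P : Z -> pt) (i j : Z) (l : R) (x : pt) : Prop :=
  in_seg (Peq n P j l) (Peq n P (j + 1)%Z l) x /\
  in_seg (Peq n P (i - 1)%Z l) (Peq n P i l) x.

Definition Gamma_plus (n : nat) (P : Z -> pt) (i j : Z) (l : R) (x : pt) : Prop :=
  in_seg (Peq n P j l) (Peq n P (j + 1)%Z l) x /\
  in_seg (Peq n P i l) (Peq n P (i + 1)%Z l) x.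

(* open half-plane bounded by the great diagonal d_i (line through P_i, P_{i+n}),
   side selected by the sign s in {1,-1} *)
Definition in_open_halfplane_di (n : nat) (P : Z -> pt) (i : Z) (s : R) (x : pt) : Prop :=
  0 < s * cross (psub (P (i + Z.of_nat n)%Z) (P i)) (psub x (P i)).

(* Main.v *)
Require Import Defs.
From Stdlib Require Import Reals ZArith Lra Lia Psatz.
Open Scope R_scope.


Lemma cont_nbhd (f : R -> R) x a b : continuity_pt f x -> a < f x < b ->
  exists d, 0 < d /\ forall y, Rabs (y - x) < d -> a < f y < b.
Proof.
  intros Hc [Ha Hb].
  destruct (Hc (Rmin (f x - a) (b - f x))) as [alp [Halp H]].
  { apply Rmin_glb_lt; lra. }
  exists alp; split; [lra|]. intros y Hy.
  destruct (Req_dec y x) as [->|Hne]; [lra|].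
  assert (Hd := H y (conj (conj I (not_eq_sym Hne)) Hy)).
  simpl in Hd. unfold R_dist in Hd.
  pose proof (Rmin_l (f x - a) (b - f x)). pose proof (Rmin_r (f x - a) (b - f x)).
  apply Rabs_def2 in Hd. lra.
Qed.

Lemma lin_sign a b : a <> 0 -> exists d, 0 < d /\ forall h, Rabs h < d -> (a + b*h)*a > 0.
Proof.
  intros Ha.
  destruct (cont_nbhd (fun t => (a + b*t)*a) 0 0 ((a+b*0)*a + 1)) as [d [Hd H]].
  - reg.
  - split; [|lra]. replace ((a+b*0)*a) with (a*a) by ring. nra.
  - exists d; split; auto. intros h Hh. apply (H h). now rewrite Rminus_0_r.
Qed.

Lemma div_pos_of (N D : R) : N * D > 0 -> 0 < N / D.
Proof.
  intros H. assert (D <> 0) by (intro; subst; lra).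
  replace (N / D) with ((N*D) / (D*D)) by (field; auto).
  apply Rdiv_lt_0_compat; nra.
Qed.

Lemma RL (a b rho X a3 b3 Y s0 r2 kap dlt: R) :
  a <> 0 -> rho <> 0 -> X <> 0 -> a3 <> 0 -> Y <> 0 -> 0 < s0 < 1 ->
  (kap = 1 \/ kap = -1) -> 0 < dlt ->
  exists h, 0 < Rabs h < dlt /\ (a + b*h)*a > 0 /\ (a3 + b3*h)*a3 > 0 /\
    0 <= kap*h*rho/((a+b*h)*X) <= 1 /\ 0 <= (s0*a3*Y + h*r2)/((a3+b3*h)*Y) <= 1.
Proof.
  intros Ha Hr HX Ha3 HY Hs Hk Hdl.
  destruct (lin_sign a b Ha) as [d1 [Hd1 H1]].
  destruct (lin_sign a3 b3 Ha3) as [d2 [Hd2 H2]].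
  destruct (cont_nbhd (fun t => kap*t*rho/((a+b*t)*X)) 0 (-1) 1) as [d3 [Hd3 H3]].
  { reg. replace (a+b*0) with a by ring. apply Rmult_integral_contrapositive; auto. }
  { replace (kap*0*rho/((a+b*0)*X)) with 0 by (field; split; auto; lra). lra. }
  destruct (cont_nbhd (fun t => (s0*a3*Y + t*r2)/((a3+b3*t)*Y)) 0 0 1) as [d4 [Hd4 H4]].
  { reg. replace (a3+b3*0) with a3 by ring. apply Rmult_integral_contrapositive; auto. }
  { replace ((s0*a3*Y + 0*r2)/((a3+b3*0)*Y)) with s0 by (field; split; auto; lra). lra. }
  set (m := Rmin (Rmin d1 d2) (Rmin (Rmin d3 d4) dlt) / 2).
  assert (Hm : 0 < m /\ m < d1 /\ m < d2 /\ m < d3 /\ m < d4 /\ m < dlt).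
  { unfold m.
    pose proof (Rmin_l (Rmin d1 d2) (Rmin (Rmin d3 d4) dlt)).
    pose proof (Rmin_r (Rmin d1 d2) (Rmin (Rmin d3 d4) dlt)).
    pose proof (Rmin_l d1 d2). pose proof (Rmin_r d1 d2).
    pose proof (Rmin_l (Rmin d3 d4) dlt). pose proof (Rmin_r (Rmin d3 d4) dlt).
    pose proof (Rmin_l d3 d4). pose proof (Rmin_r d3 d4).
    assert (0 < Rmin (Rmin d1 d2) (Rmin (Rmin d3 d4) dlt)).
    { repeat apply Rmin_glb_lt; auto. }
    lra. }
  destruct Hm as (Hm0 & Hm1 & Hm2 & Hm3 & Hm4 & Hm5).
  assert (Hsg : exists eta, (eta = 1 \/ eta = -1) /\ eta * kap * rho * X * a > 0).
  { destruct (Rlt_or_le 0 (kap*rho*X*a)) as [Hp|Hp].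
    - exists 1; split; [left; auto| lra].
    - exists (-1); split; [right; auto|].
      assert (kap*rho*X*a <> 0).
      { destruct Hk as [->| ->]; repeat (apply Rmult_integral_contrapositive_currified); auto; lra. }
      lra. }
  destruct Hsg as [eta [He Hep]].
  exists (eta * m).
  assert (Habs : Rabs (eta*m) = m).
  { destruct He as [-> | ->].
    - rewrite Rmult_1_l, Rabs_pos_eq; lra.
    - replace (-1*m) with (-m) by ring. rewrite Rabs_Ropp, Rabs_pos_eq; lra. }
  assert (HA : forall d, m < d -> Rabs (eta*m - 0) < d) by (intros; rewrite Rminus_0_r, Habs; auto).
  specialize (H1 (eta*m)). specialize (H2 (eta*m)).
  specialize (H3 (eta*m) (HA _ Hm3)). specialize (H4 (eta*m) (HA _ Hm4)).
  rewrite Habs in H1, H2. specialize (H1 Hm1). specialize (H2 Hm2).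
  simpl in H3, H4.
  split; [rewrite Habs; lra|]. split; [auto|]. split; [auto|].
  split; [|lra].
  split; [|lra].
  left. apply div_pos_of.
  assert (eta*eta = 1) by (destruct He as [-> | ->]; ring).
  assert (Hq : kap * (eta * m) * rho * ((a + b * (eta * m)) * X) * (a*a) =
               m * (eta*kap*rho*X*a) * ((a+b*(eta*m))*a)) by ring.
  assert (a*a > 0) by nra.
  assert (m * (eta*kap*rho*X*a) * ((a+b*(eta*m))*a) > 0).
  { apply Rmult_gt_0_compat; [apply Rmult_gt_0_compat|]; lra. }
  nra.
Qed.

Lemma deriv_lin (g : R -> R) x d a b : derivable_pt_lim g x d ->
  (forall h, g (x + h) = (a + b*h)*h) -> d = a.
Proof.
  intros Hd Hg. apply (uniqueness_limite g x); auto.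
  intros eps Heps.
  assert (Hb : 0 < Rabs b + 1) by (pose proof (Rabs_pos b); lra).
  exists (mkposreal (eps / (Rabs b + 1)) (Rdiv_lt_0_compat _ _ Heps Hb)).
  intros h Hh0 Hh. simpl in Hh.
  rewrite Hg. replace (g x) with (g (x + 0)) by (f_equal; ring). rewrite Hg.
  replace (((a + b * h) * h - (a + b * 0) * 0) / h - a) with (b*h) by (field; auto).
  rewrite Rabs_mult.
  apply Rle_lt_trans with (Rabs b * (eps / (Rabs b + 1))).
  { apply Rmult_le_compat_l; [apply Rabs_pos| lra]. }
  apply Rmult_lt_reg_r with (Rabs b + 1); auto.
  replace (Rabs b * (eps / (Rabs b + 1)) * (Rabs b + 1)) with (Rabs b * eps) by (field; lra).
  pose proof (Rabs_pos b). nra.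
Qed.


Ltac dpt := repeat match goal with
  | p : pt |- _ => destruct p
  | p : (R*R)%type |- _ => destruct p end.
Ltac inj := repeat match goal with H : (_,_) = (_,_) |- _ => injection H; clear H; intros end.
Ltac unf := unfold cross, psub, padd, pscale in *; simpl in *.

Lemma cross_sl p (u w : pt) : cross (pscale p u) w = p * cross u w.
Proof. dpt; unf; ring. Qed.
Lemma cross_sr p (u w : pt) : cross u (pscale p w) = p * cross u w.
Proof. dpt; unf; ring. Qed.
Lemma cross_addl (u v w : pt) : cross (padd u v) w = cross u w + cross v w.
Proof. dpt; unf; ring. Qed.
Lemma cross_anti (u w : pt) : cross u w = - cross w u.
Proof. dpt; unf; ring. Qed.
Lemma cross_self (u : pt) : cross u u = 0.
Proof. dpt; unf; ring. Qed.

Lemma par_scale (u a b : pt) : cross u a <> 0 -> cross b a = 0 -> exists c, b = pscale c a.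
Proof.
  destruct u as [u1 u2], a as [a1 a2], b as [b1 b2]; unf; intros Hu Hb.
  assert (Hn : a1*a1 + a2*a2 <> 0).
  { intro H. assert (a1 = 0) by nra. assert (a2 = 0) by nra. subst. apply Hu; ring. }
  exists ((b1*a1 + b2*a2)/(a1*a1+a2*a2)).
  f_equal; field_simplify_eq; auto.
  - replace (b1 * a2 ^ 2) with (a2 * (b1 * a2 - b2 * a1) + a1 * b2 * a2) by ring. rewrite Hb; ring.
  - replace (b2 * a1 ^ 2) with (- a1 * (b1 * a2 - b2 * a1) + b1 * a1 * a2) by ring. rewrite Hb; ring.
Qed.

Lemma inter_exists (Xim Xi Xj Xj1 : pt) tau sig :
  cross (psub Xi Xim) (psub Xj1 Xj) <> 0 -> 0 <= tau <= 1 -> 0 <= sig <= 1 ->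
  tau * cross (psub Xi Xim) (psub Xj1 Xj) = cross (psub Xi Xj) (psub Xj1 Xj) ->
  sig * cross (psub Xj1 Xj) (psub Xi Xim) = cross (psub Xi Xj) (psub Xi Xim) ->
  exists x, in_seg Xj Xj1 x /\ in_seg Xim Xi x.
Proof.
  intros Hc Ht Hs H1 H2.
  exists (padd Xj (pscale sig (psub Xj1 Xj))). split.
  - exists sig; split; auto.
  - exists (1 - tau); split; [lra|].
    destruct Xim as [m1 m2], Xi as [i1 i2], Xj as [j1 j2], Xj1 as [k1 k2].
    revert Hc H1 H2; unf; intros Hc H1 H2.
    set (v1 := i1 - m1) in *. set (v2 := i2 - m2) in *.
    set (e1 := k1 - j1) in *. set (e2 := k2 - j2) in *.
    set (C := v1*e2 - v2*e1) in *.
    assert (K1: i1 - j1 = tau*v1 + sig*e1).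
    { apply (Rmult_eq_reg_r C); auto.
      replace ((tau*v1+sig*e1)*C) with (v1*(tau*C) - e1*(sig*(e1*v2-e2*v1))) by (unfold C; ring).
      rewrite H1, H2. unfold C; ring. }
    assert (K2: i2 - j2 = tau*v2 + sig*e2).
    { apply (Rmult_eq_reg_r C); auto.
      replace ((tau*v2+sig*e2)*C) with (v2*(tau*C) - e2*(sig*(e1*v2-e2*v1))) by (unfold C; ring).
      rewrite H1, H2. unfold C; ring. }
    f_equal.
    + replace (m1 + (1-tau)*v1) with (i1 - tau*v1) by (unfold v1; ring). lra.
    + replace (m2 + (1-tau)*v2) with (i2 - tau*v2) by (unfold v2; ring). lra.
Qed.

Lemma inter_exists2 (Xi Xi1 Xj Xj1 : pt) t sig :
  cross (psub Xi1 Xi) (psub Xj1 Xj) <> 0 -> 0 <= t <= 1 -> 0 <= sig <= 1 ->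
  t * cross (psub Xi1 Xi) (psub Xj1 Xj) = - cross (psub Xi Xj) (psub Xj1 Xj) ->
  sig * cross (psub Xj1 Xj) (psub Xi1 Xi) = cross (psub Xi Xj) (psub Xi1 Xi) ->
  exists x, in_seg Xj Xj1 x /\ in_seg Xi Xi1 x.
Proof.
  intros Hc Ht Hs H1 H2.
  exists (padd Xj (pscale sig (psub Xj1 Xj))). split.
  - exists sig; split; auto.
  - exists t; split; [lra|].
    destruct Xi as [m1 m2], Xi1 as [i1 i2], Xj as [j1 j2], Xj1 as [k1 k2].
    revert Hc H1 H2; unf; intros Hc H1 H2.
    set (v1 := i1 - m1) in *. set (v2 := i2 - m2) in *.
    set (e1 := k1 - j1) in *. set (e2 := k2 - j2) in *.
    set (C := v1*e2 - v2*e1) in *.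
    assert (K1: m1 - j1 = -t*v1 + sig*e1).
    { apply (Rmult_eq_reg_r C); auto.
      replace ((-t*v1+sig*e1)*C) with (- v1*(t*C) - e1*(sig*(e1*v2-e2*v1))) by (unfold C; ring).
      rewrite H1, H2. unfold C; ring. }
    assert (K2: m2 - j2 = -t*v2 + sig*e2).
    { apply (Rmult_eq_reg_r C); auto.
      replace ((-t*v2+sig*e2)*C) with (- v2*(t*C) - e2*(sig*(e1*v2-e2*v1))) by (unfold C; ring).
      rewrite H1, H2. unfold C; ring. }
    f_equal; lra.
Qed.

Lemma side_minus (A Dv Ev Pm Pi x : pt) l al t :
  Pi = padd A (pscale l Dv) -> psub Pi Pm = pscale al Ev ->
  x = padd Pm (pscale t (psub Pi Pm)) ->
  cross Dv (psub x A) = (1 - t) * al * cross Ev Dv.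
Proof.
  intros H1 H2 H3. rewrite H2 in H3. subst x.
  destruct A, Dv, Ev, Pm, Pi. unf. inj. nra.
Qed.

Lemma side_plus (A Dv Ev Pi Pi1 x : pt) l al t :
  Pi = padd A (pscale l Dv) -> psub Pi1 Pi = pscale al Ev ->
  x = padd Pi (pscale t (psub Pi1 Pi)) ->
  cross Dv (psub x A) = - t * al * cross Ev Dv.
Proof.
  intros H1 H2 H3. rewrite H2 in H3. subst x.
  destruct A, Dv, Ev, Pi1, Pi. unf. inj. subst. ring.
Qed.

Lemma nonvertex (A B x Xi : pt) s :
  x = padd A (pscale s (psub B A)) -> x = Xi -> cross (psub Xi A) (psub B A) = 0.
Proof. intros H1 H2. subst. destruct A, B. unf. ring. Qed.
Lemma cross_tri (A B C : pt) : cross (psub B A) (psub C A) = cross (psub B A) (psub C B).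
Proof. destruct A, B, C; unf; ring. Qed.

Lemma loc_conv n P k : is_CPOS n P -> 0 < cross (edge P (k-1)) (edge P k).
Proof.
  intros (_ & _ & Hc & Ha & _ & _).
  pose proof (Hc (k-1)%Z (k+1)%Z) as H1. pose proof (Ha k) as H2.
  unfold edge in *. replace (k - 1 + 1)%Z with k in * by ring.
  rewrite cross_tri in H1. lra.
Qed.

Lemma loc_conv' n P k : is_CPOS n P -> 0 < cross (edge P k) (edge P (k+1)).
Proof. intros H. pose proof (loc_conv n P (k+1) H). now replace (k+1-1)%Z with k in H0 by ring. Qed.

Lemma ex_coef n P k : is_CPOS n P -> exists c, edge P (k + Z.of_nat n) = pscale c (edge P k).
Proof.
  intros (_ & _ & _ & Ha & Ho & _). apply (par_scale (edge P (k-1))); auto.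
Qed.

Lemma coef_step n P k c c' : is_CPOS n P ->
  edge P (k + Z.of_nat n) = pscale c (edge P k) ->
  edge P (k + 1 + Z.of_nat n) = pscale c' (edge P (k+1)) -> 0 < c * c'.
Proof.
  intros H H1 H2.
  pose proof (loc_conv' n P (k + Z.of_nat n) H) as L1.
  replace (k + Z.of_nat n + 1)%Z with (k + 1 + Z.of_nat n)%Z in L1 by ring.
  rewrite H1, H2, cross_sl, cross_sr in L1.
  pose proof (loc_conv' n P k H). nra.
Qed.

Lemma coef_neg n P k c : is_CPOS n P -> edge P (k + Z.of_nat n) = pscale c (edge P k) -> c < 0.
Proof.
  intros H. revert c.
  set (Q := fun k => forall c, edge P (k + Z.of_nat n) = pscale c (edge P k) -> c < 0).
  assert (Hup : forall k, Q k -> Q (k+1)%Z).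
  { intros k' Hk c' Hc'. destruct (ex_coef n P k' H) as [c Hc].
    pose proof (Hk c Hc). pose proof (coef_step n P k' c c' H Hc Hc'). nra. }
  assert (Hdn : forall k, Q (k+1)%Z -> Q k).
  { intros k' Hk c Hc. destruct (ex_coef n P (k'+1) H) as [c' Hc'].
    pose proof (Hk c' Hc'). pose proof (coef_step n P k' c c' H Hc Hc'). nra. }
  assert (H1 : Q 1%Z).
  { intros c Hc. pose proof H as (Hn & _ & _ & _ & _ & Ho).
    pose proof (loc_conv n P (Z.of_nat n + 1) H) as L.
    replace (Z.of_nat n + 1 - 1)%Z with (Z.of_nat n) in L by ring.
    rewrite Z.add_comm, Hc, cross_sr in L.
    assert (L2 : 0 < cross (edge P 1) (edge P (Z.of_nat n))) by (apply Ho; lia).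
    rewrite cross_anti in L2. nra. }
  assert (H0 : Q 0%Z) by (apply Hdn; exact H1).
  apply (Z.peano_ind Q H0).
  - intros x Hx. rewrite <- Z.add_1_r. auto.
  - intros x Hx. apply Hdn. now replace (Z.pred x + 1)%Z with x by lia.
Qed.

Lemma K2_pos n P i : is_CPOS n P -> 0 < cross (edge P i) (psub (P (i + Z.of_nat n)%Z) (P i)).
Proof.
  intros H. pose proof H as (_ & _ & Hc & _ & _ & _).
  pose proof (Hc i (i + Z.of_nat n - 1)%Z) as H1.
  destruct (ex_coef n P i H) as [c Hce]. pose proof (coef_neg n P i c H Hce) as Hcn.
  pose proof (loc_conv n P (i + Z.of_nat n) H) as L.
  rewrite Hce, cross_sr in L.
  assert (Eq : cross (edge P i) (psub (P (i + Z.of_nat n - 1)%Z) (P i)) =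
     cross (edge P i) (psub (P (i + Z.of_nat n)%Z) (P i)) - cross (edge P i) (edge P (i + Z.of_nat n - 1))).
  { unfold edge. replace (i + Z.of_nat n - 1 + 1)%Z with (i + Z.of_nat n)%Z by ring.
    destruct (P i), (P (i+1)%Z), (P (i + Z.of_nat n)%Z), (P (i + Z.of_nat n - 1)%Z). unf. ring. }
  rewrite Eq in H1. rewrite (cross_anti (edge P i) (edge P (i + Z.of_nat n - 1))) in H1.
  nra.
Qed.

Lemma K1_pos n P i : is_CPOS n P -> 0 < cross (edge P (i-1)) (psub (P (i + Z.of_nat n)%Z) (P i)).
Proof.
  intros H. pose proof H as (_ & _ & Hc & _ & _ & _).
  pose proof (Hc (i-1)%Z (i + Z.of_nat n + 1)%Z) as H1.
  destruct (ex_coef n P (i-1) H) as [c Hce]. pose proof (coef_neg n P (i-1) c H Hce) as Hcn.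
  pose proof (loc_conv n P (i + Z.of_nat n) H) as L.
  replace (i + Z.of_nat n - 1)%Z with (i - 1 + Z.of_nat n)%Z in L by ring.
  rewrite Hce, cross_sl in L.
  assert (Eq : cross (edge P (i-1)) (psub (P (i + Z.of_nat n + 1)%Z) (P (i-1)%Z)) =
     cross (edge P (i-1)) (edge P (i + Z.of_nat n)) + cross (edge P (i-1)) (psub (P (i + Z.of_nat n)%Z) (P i))).
  { unfold edge. replace (i - 1 + 1)%Z with i by ring.
    destruct (P i), (P (i-1)%Z), (P (i + Z.of_nat n)%Z), (P (i + Z.of_nat n + 1)%Z). unf. ring. }
  rewrite Eq in H1. nra.
Qed.

Lemma pscale1 (v : pt) : pscale 1 v = v.
Proof. destruct v; unf; f_equal; ring. Qed.
Lemma pscale_comp a b (v : pt) : pscale a (pscale b v) = pscale (a*b) v.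
Proof. destruct v; unf; f_equal; ring. Qed.
Lemma pscale_inv c (X Y : pt) : c <> 0 -> Y = pscale c X -> X = pscale (/c) Y.
Proof. intros Hc ->. destruct X; unf; f_equal; field; auto. Qed.

Lemma rep n P r q : is_CPOS n P ->
  exists mu, mu <> 0 /\ edge P (q * Z.of_nat n + r) = pscale mu (edge P r).
Proof.
  intros H. revert q.
  apply Z.peano_ind.
  - exists 1; split; [lra|]. rewrite pscale1. f_equal; ring.
  - intros q [mu [Hmu Hq]].
    destruct (ex_coef n P (q * Z.of_nat n + r) H) as [c Hc].
    pose proof (coef_neg n P _ c H Hc).
    exists (c*mu); split; [apply Rmult_integral_contrapositive_currified; lra|].
    replace (Z.succ q * Z.of_nat n + r)%Z with (q * Z.of_nat n + r + Z.of_nat n)%Z by lia.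
    rewrite Hc, Hq, pscale_comp. reflexivity.
  - intros q [mu [Hmu Hq]].
    destruct (ex_coef n P (Z.pred q * Z.of_nat n + r) H) as [c Hc].
    pose proof (coef_neg n P _ c H Hc).
    replace (Z.pred q * Z.of_nat n + r + Z.of_nat n)%Z with (q * Z.of_nat n + r)%Z in Hc by lia.
    rewrite Hq in Hc. apply pscale_inv in Hc; [|lra].
    exists (/c * mu); split.
    + apply Rmult_integral_contrapositive_currified; auto. apply Rinv_neq_0_compat; lra.
    + rewrite Hc, pscale_comp. reflexivity.
Qed.

Lemma rep1 n P a : is_CPOS n P ->
  exists r q mu, (1 <= r <= Z.of_nat n)%Z /\ a = (q * Z.of_nat n + r)%Z /\ mu <> 0 /\
     edge P a = pscale mu (edge P r).
Proof.
  intros H. pose proof H as (Hn & _).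
  assert (HN : (0 < Z.of_nat n)%Z) by lia.
  pose proof (Z.div_mod (a-1) (Z.of_nat n) ltac:(lia)) as Hd.
  pose proof (Z.mod_pos_bound (a-1) (Z.of_nat n) HN) as Hb.
  exists ((a-1) mod Z.of_nat n + 1)%Z, ((a-1)/Z.of_nat n)%Z.
  destruct (rep n P ((a-1) mod Z.of_nat n + 1)%Z ((a-1)/Z.of_nat n)%Z H) as [mu [Hmu He]].
  assert (Ha : a = ((a - 1) / Z.of_nat n * Z.of_nat n + ((a - 1) mod Z.of_nat n + 1))%Z) by lia.
  exists mu. split; [lia|]. split; [exact Ha|]. split; auto.
  rewrite Ha at 1. exact He.
Qed.

Lemma nonpar n P a b : is_CPOS n P -> ~ (Z.divide (Z.of_nat n) (a - b)) ->
  cross (edge P a) (edge P b) <> 0.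
Proof.
  intros H Hnd. pose proof H as (Hn & _ & _ & _ & _ & Ho).
  destruct (rep1 n P a H) as (ra & qa & mua & Hra & Ha & Hmua & Ea).
  destruct (rep1 n P b H) as (rb & qb & mub & Hrb & Hb & Hmub & Eb).
  rewrite Ea, Eb, cross_sl, cross_sr.
  assert (Hne : ra <> rb).
  { intro Heq. apply Hnd. exists (qa - qb)%Z. subst. lia. }
  assert (cross (edge P ra) (edge P rb) <> 0).
  { destruct (proj1 (Z.lt_gt_cases ra rb) Hne) as [Hl|Hl].
    - pose proof (Ho ra rb ltac:(lia) Hl ltac:(lia)). lra.
    - pose proof (Ho rb ra ltac:(lia) ltac:(lia) ltac:(lia)). rewrite cross_anti. lra. }
  repeat apply Rmult_integral_contrapositive_currified; auto.
Qed.

Lemma idx_div n a b : (1 <= n)%nat -> ~ idx_eq n a b -> ~ idx_eq n a (b + Z.of_nat n)%Z ->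
  ~ Z.divide (Z.of_nat n) (a - b).
Proof.
  intros Hn H1 H2 [m Hm]. unfold idx_eq in *.
  destruct (Z.Even_or_Odd m) as [[p Hp]|[p Hp]].
  - apply H1. replace (a - b)%Z with (p * (2 * Z.of_nat n))%Z by (rewrite Hm, Hp; ring).
    apply Z.mod_mul. lia.
  - apply H2. replace (a - (b + Z.of_nat n))%Z with (p * (2 * Z.of_nat n))%Z
      by (replace (a - (b + Z.of_nat n))%Z with ((a - b) - Z.of_nat n)%Z by ring; rewrite Hm, Hp; ring).
    apply Z.mod_mul. lia.
Qed.


Lemma eeq_form n P k c l : edge P (k + Z.of_nat n) = pscale c (edge P k) ->
  eeq n P k l = pscale (1 - l + l*c) (edge P k).
Proof.
  unfold eeq, Peq, edge. replace (k + 1 + Z.of_nat n)%Z with (k + Z.of_nat n + 1)%Z by ring.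
  destruct (P k) as [a1 a2], (P (k+1)%Z) as [b1 b2], (P (k + Z.of_nat n)%Z) as [c1 c2],
    (P (k + Z.of_nat n + 1)%Z) as [d1 d2].
  unf. intros He. injection He; intros E2 E1.
  assert (d1 = c1 + c*(b1-a1)) by lra. assert (d2 = c2 + c*(b2-a2)) by lra. subst.
  f_equal; ring.
Qed.

Lemma Peq_lin n P k l0 h : Peq n P k (l0 + h) =
  padd (Peq n P k l0) (pscale h (psub (P (k + Z.of_nat n)%Z) (P k))).
Proof. unfold Peq. destruct (P k), (P (k + Z.of_nat n)%Z). unf. f_equal; ring. Qed.

Lemma Peq_base n P k l : Peq n P k l = padd (P k) (pscale l (psub (P (k + Z.of_nat n)%Z) (P k))).
Proof. reflexivity. Qed.

Lemma Rform (Xi0 Xj0 Xj10 Di Dj Ej : pt) s0 a3 h :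
  Xi0 = padd Xj0 (pscale s0 (psub Xj10 Xj0)) -> psub Xj10 Xj0 = pscale a3 Ej ->
  psub (padd Xi0 (pscale h Di)) (padd Xj0 (pscale h Dj)) =
  padd (pscale (s0*a3) Ej) (pscale h (psub Di Dj)).
Proof.
  intros H1 H2. rewrite H2 in H1. subst. destruct Xj0, Di, Dj, Ej. unf. f_equal; ring.
Qed.


Lemma padd_s1 (A B : pt) : padd A (pscale 1 (psub B A)) = B.
Proof. destruct A, B; unfold padd, pscale, psub; simpl; f_equal; ring. Qed.
Lemma padd_s0 (A B : pt) : padd A (pscale 0 (psub B A)) = A.
Proof. destruct A, B; unfold padd, pscale, psub; simpl; f_equal; ring. Qed.
Lemma cross_addl' (u v w : pt) : cross (padd u v) w = cross u w + cross v w.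
Proof. destruct u, v, w; unfold cross, padd; simpl; ring. Qed.

Lemma sgn_help s T a K : 0 <= T*K -> 0 < s*(T*a*K) -> 0 < s*a.
Proof. intros H1 H2. destruct (Rlt_or_le 0 (s*a)); auto.
  assert (E : s*(T*a*K) = (s*a)*(T*K)) by ring. rewrite E in H2. nra. Qed.
Lemma sgn_help2 s T a K : 0 <= T*K -> 0 < s*(-T*a*K) -> 0 < -s*a.
Proof. intros H1 H2. destruct (Rlt_or_le 0 (-s*a)); auto.
  assert (E : s*(-T*a*K) = (-s*a)*(T*K)) by ring. rewrite E in H2. nra. Qed.
Lemma final_contra a1 a2 x1 x2 s : (s = 1 \/ s = -1) -> 0 < a1*a2 -> x1*a1 > 0 -> x2*a2 > 0 ->
  0 < s*x1 -> 0 < -s*x2 -> False.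
Proof. intros [-> | ->] H1 H2 H3 H4 H5.
  - assert (0 < x1) by lra. assert (0 < a1) by nra. assert (0 < a2) by nra. assert (0 < x2) by nra. lra.
  - assert (x1 < 0) by lra. assert (a1 < 0) by nra. assert (a2 < 0) by nra. assert (x2 < 0) by nra. lra.
Qed.

Theorem mainTheorem7 (n : nat) (P : Z -> pt) (i j : Z) (l0 : R) :
  is_CPOS n P ->
  ~ idx_eq n j (i - 1)%Z -> ~ idx_eq n j i ->
  ~ idx_eq n j (i + Z.of_nat n - 1)%Z -> ~ idx_eq n j (i + Z.of_nat n)%Z ->
  feq n P i l0 <> 0 ->
  in_open_seg (Peq n P j l0) (Peq n P (j + 1)%Z l0) (Peq n P i l0) ->
  (exists d : R,
     derivable_pt_lim
       (fun l => cross (psub (Peq n P i l) (Peq n P j l)) (eeq n P j l)) l0 d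
     /\ d <> 0) ->
  ((exists eps : R, 0 < eps /\
     exists s : R, (s = 1 \/ s = -1) /\
       forall (l : R) (x : pt), 0 < Rabs (l - l0) < eps ->
         (Gamma_minus n P i j l x \/ Gamma_plus n P i j l x) ->
         in_open_halfplane_di n P i s x)
   <-> feq n P i l0 < 0).
Proof.
  intros HP Hj1 Hj2 Hj3 Hj4 Hf Hseg [d [Hd Hd0]].
  destruct (ex_coef n P (i-1) HP) as [c1 Hc1].
  destruct (ex_coef n P i HP) as [c2 Hc2].
  destruct (ex_coef n P j HP) as [c3 Hc3].
  pose proof (K1_pos n P i HP) as HK1. pose proof (K2_pos n P i HP) as HK2.
  pose proof (loc_conv n P i HP) as HX12.
  assert (Hv : forall l, psub (Peq n P i l) (Peq n P (i-1) l) = pscale (1 - l + l*c1) (edge P (i-1))).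
  { intro l. rewrite <- (eeq_form n P (i-1) c1 l Hc1). unfold eeq. now rewrite Z.sub_add. }
  assert (Hw : forall l, psub (Peq n P (i+1) l) (Peq n P i l) = pscale (1 - l + l*c2) (edge P i)).
  { intro l. rewrite <- (eeq_form n P i c2 l Hc2). reflexivity. }
  assert (He : forall l, psub (Peq n P (j+1) l) (Peq n P j l) = pscale (1 - l + l*c3) (edge P j))
    by (intro; apply eeq_form; auto).
  assert (Hfeq : feq n P i l0 = (1 - l0 + l0*c1)*(1 - l0 + l0*c2)*cross (edge P (i-1)) (edge P i)).
  { unfold feq. rewrite (eeq_form n P (i-1) c1 l0 Hc1), (eeq_form n P i c2 l0 Hc2), cross_sl, cross_sr. ring. }
  set (a1 := 1 - l0 + l0*c1) in *. set (a2 := 1 - l0 + l0*c2) in *. set (a3 := 1 - l0 + l0*c3).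
  assert (Hal : forall c h, 1 - (l0+h) + (l0+h)*c = (1 - l0 + l0*c) + (c-1)*h) by (intros; ring).
  destruct Hseg as [s0 [Hs0 Hx0]].
  set (R1 := psub (psub (P (i + Z.of_nat n)%Z) (P i)) (psub (P (j + Z.of_nat n)%Z) (P j))).
  assert (Rf : forall h, psub (Peq n P i (l0+h)) (Peq n P j (l0+h)) =
            padd (pscale (s0*a3) (edge P j)) (pscale h R1)).
  { intro h. rewrite !Peq_lin. apply Rform with (Xj10 := Peq n P (j+1) l0); auto. }
  assert (cR : forall h w, cross (psub (Peq n P i (l0+h)) (Peq n P j (l0+h))) w =
            s0*a3*cross (edge P j) w + h * cross R1 w).
  { intros h w. rewrite Rf, cross_addl', !cross_sl. ring. }
  set (rho := cross R1 (edge P j)).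
  assert (gform : forall h, cross (psub (Peq n P i (l0+h)) (Peq n P j (l0+h))) (eeq n P j (l0+h))
                   = ((a3 + (c3-1)*h) * rho) * h).
  { intro h. unfold eeq. rewrite He, cross_sr, cR, cross_self, Hal. fold a3 rho. ring. }
  assert (Hda : d = a3 * rho).
  { apply (deriv_lin _ l0 d (a3*rho) ((c3-1)*rho) Hd). intro h. cbv beta. rewrite gform. ring. }
  assert (Ha3 : a3 <> 0) by (intro Z0; apply Hd0; rewrite Hda, Z0; ring).
  assert (Hrho : rho <> 0) by (intro Z0; apply Hd0; rewrite Hda, Z0; ring).
  assert (Ha1 : a1 <> 0) by (intro Z0; apply Hf; rewrite Hfeq, Z0; ring).
  assert (Ha2 : a2 <> 0) by (intro Z0; apply Hf; rewrite Hfeq, Z0; ring).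
  destruct (lin_sign a3 (c3-1) Ha3) as [dg [Hdg Hg]].
  destruct (lin_sign a1 (c1-1) Ha1) as [d1 [Hd1 H1]].
  destruct (lin_sign a2 (c2-1) Ha2) as [d2 [Hd2 H2]].
  assert (gnz : forall l, 0 < Rabs (l - l0) < dg ->
     cross (psub (Peq n P i l) (Peq n P j l)) (psub (Peq n P (j+1) l) (Peq n P j l)) <> 0).
  { intros l [Hl1 Hl2]. replace l with (l0 + (l - l0)) by ring.
    pose proof (gform (l - l0)) as G. unfold eeq in G. rewrite G.
    pose proof (Hg _ Hl2). assert (l - l0 <> 0) by (intro Z0; rewrite Z0, Rabs_R0 in Hl1; lra).
    repeat apply Rmult_integral_contrapositive_currified; auto. intro Z0; rewrite Z0 in *; lra. }
  split.
  - intros [eps [Heps [s [Hs H]]]].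
    destruct (Rlt_or_le (feq n P i l0) 0) as [Hlt|Hge]; [exact Hlt|exfalso].
    assert (Hpos : 0 < a1 * a2).
    { rewrite Hfeq in Hge, Hf. destruct (Rle_lt_or_eq _ _ Hge) as [Hg'|Hg']; [nra|].
      symmetry in Hg'. contradiction. }
    assert (Hn1 : (1 <= n)%nat) by (destruct HP as [Hn _]; lia).
    assert (X13 : cross (edge P (i-1)) (edge P j) <> 0).
    { rewrite cross_anti. intro Z0. apply (nonpar n P j (i-1) HP); [|lra].
      apply idx_div; auto. now replace (i - 1 + Z.of_nat n)%Z with (i + Z.of_nat n - 1)%Z by ring. }
    assert (X23 : cross (edge P i) (edge P j) <> 0).
    { rewrite cross_anti. intro Z0. apply (nonpar n P j i HP); [|lra].
      apply idx_div; auto. }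
    assert (E1 : forall h, 1 - (l0+h) + (l0+h)*c1 = a1 + (c1-1)*h) by (intro; unfold a1; ring).
    assert (E2 : forall h, 1 - (l0+h) + (l0+h)*c2 = a2 + (c2-1)*h) by (intro; unfold a2; ring).
    assert (E3 : forall h, 1 - (l0+h) + (l0+h)*c3 = a3 + (c3-1)*h) by (intro; unfold a3; ring).
    assert (nz : forall a b h, (a + b*h)*a > 0 -> a + b*h <> 0) by (intros a b h Hab Z0; rewrite Z0 in Hab; lra).
    assert (HY13 : cross (edge P j) (edge P (i-1)) <> 0) by (rewrite cross_anti; intro; apply X13; lra).
    destruct (RL a1 (c1-1) rho (cross (edge P (i-1)) (edge P j)) a3 (c3-1)
               (cross (edge P j) (edge P (i-1))) s0 (cross R1 (edge P (i-1))) 1 eps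
               Ha1 Hrho X13 Ha3 HY13 Hs0 (or_introl eq_refl) Heps) as [h (Hh & Hh1 & Hh3 & Ht & Hsg)].
    destruct (inter_exists (Peq n P (i-1) (l0+h)) (Peq n P i (l0+h)) (Peq n P j (l0+h)) (Peq n P (j+1) (l0+h))
       _ _ ltac:(rewrite Hv, He, cross_sl, cross_sr, E1, E3;
                 repeat apply Rmult_integral_contrapositive_currified; (assumption || (eapply nz; eassumption))) Ht Hsg) as [x [Hxj Hxi]].
    { pose proof (gform h) as G. unfold eeq in G. rewrite G.
      rewrite Hv, He, cross_sl, cross_sr, E1, E3.
      field; repeat split; (assumption || (eapply nz; eassumption)). }
    { rewrite He, Hv, cross_sl, cross_sr, E1, E3, cross_sr, cR.
      field; repeat split; (assumption || (eapply nz; eassumption)). }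
    assert (Hm := H (l0+h) x ltac:(replace (l0 + h - l0) with h by ring; exact Hh)
                   (or_introl (conj Hxj Hxi))).
    unfold in_open_halfplane_di in Hm.
    destruct Hxi as [t [Ht' Hx']].
    rewrite (side_minus (P i) _ (edge P (i-1)) _ _ x (l0+h) (1 - (l0+h) + (l0+h)*c1) t
               (Peq_base n P i (l0+h)) (Hv (l0+h)) Hx'), E1 in Hm.
    assert (TK1 : 0 <= (1-t) * cross (edge P (i - 1)) (psub (P (i + Z.of_nat n)%Z) (P i)))
      by (apply Rmult_le_pos; lra).
    pose proof (sgn_help _ _ _ _ TK1 Hm) as Sm.
    assert (HY23 : cross (edge P j) (edge P i) <> 0) by (rewrite cross_anti; intro; apply X23; lra).
    destruct (RL a2 (c2-1) rho (cross (edge P i) (edge P j)) a3 (c3-1)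
               (cross (edge P j) (edge P i)) s0 (cross R1 (edge P i)) (-1) eps
               Ha2 Hrho X23 Ha3 HY23 Hs0 (or_intror eq_refl) Heps) as [h' (Hh' & Hh1' & Hh3' & Ht2 & Hsg2)].
    destruct (inter_exists2 (Peq n P i (l0+h')) (Peq n P (i+1) (l0+h')) (Peq n P j (l0+h')) (Peq n P (j+1) (l0+h'))
       _ _ ltac:(rewrite Hw, He, cross_sl, cross_sr, E2, E3;
                 repeat apply Rmult_integral_contrapositive_currified; (assumption || (eapply nz; eassumption))) Ht2 Hsg2) as [y [Hyj Hyi]].
    { pose proof (gform h') as G. unfold eeq in G. rewrite G.
      rewrite Hw, He, cross_sl, cross_sr, E2, E3.
      field; repeat split; (assumption || (eapply nz; eassumption)). }
    { rewrite He, Hw, cross_sl, cross_sr, E2, E3, cross_sr, cR.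
      field; repeat split; (assumption || (eapply nz; eassumption)). }
    assert (Hm2 := H (l0+h') y ltac:(replace (l0 + h' - l0) with h' by ring; exact Hh')
                   (or_intror (conj Hyj Hyi))).
    unfold in_open_halfplane_di in Hm2.
    destruct Hyi as [t2 [Ht2' Hy']].
    rewrite (side_plus (P i) _ (edge P i) _ _ y (l0+h') (1 - (l0+h') + (l0+h')*c2) t2
               (Peq_base n P i (l0+h')) (Hw (l0+h')) Hy'), E2 in Hm2.
    assert (TK2 : 0 <= t2 * cross (edge P i) (psub (P (i + Z.of_nat n)%Z) (P i)))
      by (apply Rmult_le_pos; lra).
    pose proof (sgn_help2 _ _ _ _ TK2 Hm2) as Sp.
    exact (final_contra _ _ _ _ _ Hs Hpos Hh1 Hh1' Sm Sp).
  - intros Hneg.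
    assert (Hsig : a1 * a2 < 0).
    { rewrite Hfeq in Hneg. destruct (Rlt_or_le (a1*a2) 0); auto. nra. }
    exists (Rmin dg (Rmin d1 d2)). split.
    { repeat apply Rmin_glb_lt; auto. }
    assert (Hmin : forall l, Rabs (l - l0) < Rmin dg (Rmin d1 d2) ->
      Rabs (l - l0) < dg /\ Rabs (l - l0) < d1 /\ Rabs (l - l0) < d2).
    { intros l Hl. pose proof (Rmin_l dg (Rmin d1 d2)). pose proof (Rmin_r dg (Rmin d1 d2)).
      pose proof (Rmin_l d1 d2). pose proof (Rmin_r d1 d2). lra. }
    destruct (Rlt_or_le 0 a1) as [Hpos|Hneg1]; [exists 1|exists (-1)]; (split; [lra|]);
    intros l x [Hl0 Hl] Hx; destruct (Hmin l Hl) as (Hlg & Hl1 & Hl2);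
    assert (A1 : (1 - l + l*c1)*a1 > 0) by
      (replace (1 - l + l*c1) with (a1 + (c1-1)*(l-l0)) by (unfold a1; ring); auto);
    assert (A2 : (1 - l + l*c2)*a2 > 0) by
      (replace (1 - l + l*c2) with (a2 + (c2-1)*(l-l0)) by (unfold a2; ring); auto);
    unfold in_open_halfplane_di;
    (destruct Hx as [[Hsj [t [Ht Hxi]]] | [Hsj [t [Ht Hxi]]]];
     [ rewrite (side_minus (P i) _ (edge P (i-1)) _ _ x l (1 - l + l*c1) t (Peq_base n P i l) (Hv l) Hxi);
       assert (t <> 1) by (intro Z1; rewrite Z1, padd_s1 in Hxi; destruct Hsj as [s' [_ Hs']];
                         apply (gnz l (conj Hl0 Hlg)); exact (nonvertex _ _ _ _ s' Hs' Hxi))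
     | rewrite (side_plus (P i) _ (edge P i) _ _ x l (1 - l + l*c2) t (Peq_base n P i l) (Hw l) Hxi);
       assert (t <> 0) by (intro Z1; rewrite Z1, padd_s0 in Hxi; destruct Hsj as [s' [_ Hs']];
                         apply (gnz l (conj Hl0 Hlg)); exact (nonvertex _ _ _ _ s' Hs' Hxi)) ]).
    all: try (assert (Tt : 0 < 1 - t) by (destruct Ht as [_ Ht1]; destruct (Rle_lt_or_eq _ _ Ht1); [lra|contradiction])).
    all: try (assert (Tt : 0 < t) by (destruct Ht as [Ht0 _]; destruct (Rle_lt_or_eq _ _ Ht0); [lra| subst; contradiction])).
    + assert (0 < 1 - l + l*c1) by nra.
      assert (0 < (1-t)*(1 - l + l*c1)) by nra. nra.
    + assert (a2 < 0) by nra. assert (1 - l + l*c2 < 0) by nra.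
      assert (0 < - t*(1 - l + l*c2)) by nra. nra.
    + assert (a1 < 0) by (destruct (Rle_lt_or_eq _ _ Hneg1); auto; subst; congruence).
      assert (1 - l + l*c1 < 0) by nra.
      assert (0 < (1-t)*-(1 - l + l*c1)) by nra. nra.
    + assert (a1 < 0) by (destruct (Rle_lt_or_eq _ _ Hneg1); auto; subst; congruence).
      assert (0 < a2) by nra. assert (0 < 1 - l + l*c2) by nra.
      assert (0 < t*(1 - l + l*c2)) by nra. nra.
Qed.
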